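(* Let $3\leq m\leq n$, $\ell=m-1$, $p=(m-1)n$ and $Y\in\mathbb{R}^{n\times n\times\ell}$. If $\dim U(Y)=p$, then $Y\in\mathfrak{M}$.
   Context: For $Y=(Y_1;\ldots;Y_\ell)\in\mathbb{R}^{n\times n\times\ell}$ and $\mathbf{a}=(a_1,\ldots,a_\ell,a_m)^\top\in\mathbb{R}^m$, $M(\mathbf{a},Y)=\sum_{k=1}^\ell a_kY_k-a_mE_n$. Let $\psi(\mathbf{a},Y)\in\mathbb{R}^n$ have $j$-th entry $(-1)^{n+j}\det M(\mathbf{a},Y)_{n,j}$, where $M_{n,j}$ denotes the matrix obtained by deleting row $n$ and column $j$. Let $\check{\mathbf a}=(a_1,\ldots,a_\ell)^\top$ and $\check{\mathbf a}\otimes\psi(\mathbf a,Y)=(a_1\psi(\mathbf a,Y)^\top,\ldots,a_\ell\psi(\mathbf a,Y)^\top)^\top\in\mathbb{R}^p$. $U(Y)$ is the linear span of $\{\check{\mathbf a}\otimes\psi(\mathbf a,Y)\mid \mathbf a\in\mathbb{R}^m,\ \det M(\mathbf a,Y)=0\}$. $\mathfrak{M}$ is the set of $Y$ for which there exist a real $m\times p$ matrix $(x_{ij})$ and a real $n\times p$ matrix $A=(\mathbf{a}_1,\ldots,\mathbf{a}_p)$ with $(x_{1j}Y_1+\cdots+x_{\ell j}Y_\ell-x_{mj}E_n)\mathbf{a}_j=\mathbf{0}$ for all $j$ and $\begin{pmatrix}AD_1\\ \vdots\\ AD_\ell\end{pmatrix}$ nonsingular, where $D_k=\operatorname{diag}(x_{k1},\ldots,x_{kp})$.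 *)

(* Defs.v *)
From HB Require Import structures.
From mathcomp Require Import all_boot all_order all_algebra.
Set Implicit Arguments. Unset Strict Implicit. Unset Printing Implicit Defensive.
Import Order.TTheory GRing.Theory Num.Theory.
Local Open Scope ring_scope.

Section Defs.
Variable R : fieldType.

(* ell = number of slices; m = ell.+1; vectors a in R^m are functions 'I_ell.+1 -> R,
   with a_k = a (widen_ord _ k) for k < ell, and a_m = a ord_max. *)

Definition Mmat (ell n : nat) (Y : 'I_ell -> 'M[R]_n) (a : 'I_ell.+1 -> R) : 'M[R]_n :=
  \sum_(k < ell) a (widen_ord (leqnSn ell) k) *: Y k - a ord_max *: 1%:M.

(* psi(a,Y)_j = (-1)^(n+j) det M_{n,j} = cofactor of entry (n,j) *)
Definition psi_of (n : nat) : 'M[R]_n -> 'cV[R]_n :=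
  match n return 'M[R]_n -> 'cV[R]_n with
  | 0 => fun _ => 0
  | n'.+1 => fun M => \col_(j < n'.+1) cofactor M ord_max j
  end.

Definition psi (ell n : nat) (Y : 'I_ell -> 'M[R]_n) (a : 'I_ell.+1 -> R) : 'cV[R]_n :=
  psi_of (Mmat Y a).

(* checka (x) v = (a_1 v^T, ..., a_ell v^T)^T, as a row vector of R^(ell*n)
   (row-major mxvec = block ordering) *)
Definition kronv (ell n : nat) (a : 'I_ell.+1 -> R) (v : 'cV[R]_n) : 'rV[R]_(ell * n) :=
  mxvec (\matrix_(k < ell, i < n) (a (widen_ord (leqnSn ell) k) * v i 0)).

Definition Ugen (ell n : nat) (Y : 'I_ell -> 'M[R]_n) (v : 'rV[R]_(ell * n)) : Prop :=
  exists a : 'I_ell.+1 -> R, \det (Mmat Y a) = 0 /\ v = kronv a (psi Y a).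

Definition inU (ell n : nat) (Y : 'I_ell -> 'M[R]_n) (v : 'rV[R]_(ell * n)) : Prop :=
  exists (k : nat) (c : 'I_k -> R) (w : 'I_k -> 'rV[R]_(ell * n)),
    (forall i, Ugen Y (w i)) /\ v = \sum_(i < k) c i *: w i.

Definition dimU_eq (ell n : nat) (Y : 'I_ell -> 'M[R]_n) (d : nat) : Prop :=
  exists V : {vspace 'rV[R]_(ell * n)},
    (forall v, v \in V <-> inU Y v) /\ \dim V = d.

(* The stacked matrix (A D_1; ...; A D_ell), row index k*n+i <-> (k,i) *)
Definition stackAD (ell n : nat) (x : 'M[R]_(ell.+1, ell * n)) (A : 'M[R]_(n, ell * n))
  : 'M[R]_(ell * n) :=
  \matrix_(r < ell * n, j < ell * n)
     (mxvec (\matrix_(k < ell, i < n) (x (widen_ord (leqnSn ell) k) j * A i j))) 0 r.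

Definition inFrakM (ell n : nat) (Y : 'I_ell -> 'M[R]_n) : Prop :=
  exists (x : 'M[R]_(ell.+1, ell * n)) (A : 'M[R]_(n, ell * n)),
    (forall j : 'I_(ell * n),
        Mmat Y (fun k => x k j) *m col j A = 0) /\
    stackAD x A \in unitmx.

End Defs.

(* Main.v *)
Require Import Defs.
From HB Require Import structures.
From mathcomp Require Import all_boot all_order all_algebra.
From Stdlib Require Import Classical.
Import Order.TTheory GRing.Theory Num.Theory.
Local Open Scope ring_scope.

Section Proof.
Variables (R : fieldType) (ell n : nat) (Y : 'I_ell -> 'M[R]_n.+1).

Lemma M_psi (M : 'M[R]_n.+1) : \det M = 0 -> M *m psi_of M = 0.
Proof.
move=> H; apply/matrixP => i j; rewrite !mxE.
have E : (M *m \adj M) i ord_max = 0 by rewrite mul_mx_adj H !mxE mul0rn.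
rewrite -[RHS]E !mxE; apply: eq_bigr => k _.
by rewrite /psi_of !mxE.
Qed.

Definition genmx {k} (a : 'I_k -> 'I_ell.+1 -> R) : 'M[R]_(k, ell * n.+1) :=
  \matrix_(i < k) kronv (a i) (psi Y (a i)).

Lemma allU : dimU_eq Y (ell * n.+1) -> forall v, inU Y v.
Proof.
case=> V [HV Hd] v; apply/HV.
have E : V = fullv.
  apply/eqP; rewrite eqEdim subvf /= dimvf Hd dim_matrix mul1r leqnn //=.
by move: (memvf v); rewrite -E.
Qed.

Lemma grow (HU : dimU_eq Y (ell * n.+1)) d : (d <= ell * n.+1)%N ->
  exists k (a : 'I_k -> 'I_ell.+1 -> R),
    (forall i, \det (Mmat Y (a i)) = 0) /\ (d <= \rank (genmx a))%N.
Proof.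
elim: d => [|d IH] Hd.
  by exists 0%N, (fun _ _ => 0); split => // [[]].
have [k [a [Ha Hr]]] := IH (ltnW Hd).
case: (leqP d.+1 (\rank (genmx a))) => Hlt.
  by exists k, a.
have Hr' : \rank (genmx a) = d by apply/eqP; rewrite eqn_leq Hr -ltnS Hlt.
case: (classic (exists a0, \det (Mmat Y a0) = 0 /\
            ~~ (kronv a0 (psi Y a0) <= genmx a)%MS)) => [[a0 [Ha0 Hn]]|Hno].
  pose a' (i : 'I_k.+1) := if unlift ord_max i is Some j then a j else a0.
  exists k.+1, a'; split.
    by move=> i; rewrite /a'; case: unlift.
  have Hsub : (genmx a <= genmx a')%MS.
    apply/row_subP => i.
    have -> : row i (genmx a) = row (lift ord_max i) (genmx a').
      by rewrite !rowK /a' liftK.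
    exact: row_sub.
  have Hlt2 : (genmx a < genmx a')%MS.
    rewrite ltmxE Hsub /=; apply: contra Hn => Hs.
    apply: submx_trans Hs.
    have -> : kronv a0 (psi Y a0) = row ord_max (genmx a').
      by rewrite rowK /a' unlift_none.
    exact: row_sub.
  by have := rank_ltmx Hlt2; rewrite Hr'.
exfalso.
have Hg : forall a0, \det (Mmat Y a0) = 0 -> (kronv a0 (psi Y a0) <= genmx a)%MS.
  move=> a0 Ha0; case Hb: (kronv a0 (psi Y a0) <= genmx a)%MS => //.
  by exfalso; apply: Hno; exists a0; rewrite Hb.
have H1 : (1%:M <= genmx a)%MS.
  apply/row_subP => i.
  have [kk [c [w [Hw ->]]]] := allU HU (row i 1%:M).
  apply: summx_sub => j _; apply: scalemx_sub.
  by have [a0 [Ha0 ->]] := Hw j; apply: Hg.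
have := mxrankS H1; rewrite mxrank1 Hr'.
by move=> H; move: (leq_trans Hd H); rewrite ltnn.
Qed.

Lemma Mmat_ext (a b : 'I_ell.+1 -> R) : (forall k, a k = b k) -> Mmat Y a = Mmat Y b.
Proof.
move=> H; rewrite /Mmat H; congr (_ - _); apply: eq_bigr => k _; by rewrite H.
Qed.

Lemma main_gen : dimU_eq Y (ell * n.+1) -> inFrakM Y.
Proof.
move=> HU.
have [k [a [Ha Hr]]] := grow HU (ell * n.+1) (leqnn _).
have Hfull : row_full (genmx a).
  by rewrite /row_full eqn_leq rank_leq_col Hr.
set f := fullrankfun Hfull.
have Hu := fullrowsub_unit Hfull.
exists (\matrix_(kk, j) a (f j) kk), (\matrix_(i, j) psi Y (a (f j)) i 0).
split.
  move=> j.
  rewrite (@Mmat_ext _ (a (f j))); last by move=> kk; rewrite mxE.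
  have -> : col j (\matrix_(i, j) psi Y (a (f j)) i 0) = psi Y (a (f j)).
    by apply/matrixP => i l; rewrite !mxE.
  exact: M_psi.
have -> : stackAD (\matrix_(kk, j) a (f j) kk) (\matrix_(i, j) psi Y (a (f j)) i 0)
   = (rowsub f (genmx a))^T.
  apply/matrixP => r j; rewrite !mxE /kronv; congr (mxvec _ 0 r).
  by apply/matrixP => kk i; rewrite !mxE.
by rewrite unitmx_tr.
Qed.

End Proof.

Theorem mainTheorem14 (R : realFieldType) (m n : nat)
  (Hm : (3 <= m)%N) (Hmn : (m <= n)%N) (Y : 'I_(m.-1) -> 'M[R]_n) :
  dimU_eq Y (m.-1 * n)%N -> inFrakM Y.
Proof.
case: n Hmn Y => [|n] Hmn Y; first by move: (leq_trans Hm Hmn).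
exact: main_gen.
Qed.
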